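(* Consider the pointer procedure described in the context, started with $P_0=22$ and all other pointers uninitiated, and let $R_0=22$ and, for $j\ge1$, let $R_j$ be the content of $P_0$ immediately after the $j$-th call of $\mathrm{Inc}(0)$ has finished. Then the infinite concatenation $R_0R_1R_2\cdots$ equals $K'$, i.e. the sequence $(K_{n+1})_{n\ge1}$ obtained from the classical Kolakoski sequence $K$ by deleting its first symbol.
   Context: $K=(K_n)_{n\ge1}$ denotes the classical Kolakoski sequence: the unique infinite sequence over $\{1,2\}$ with $K_1=1$ whose sequence of run lengths equals $K$ itself. $K'$ is defined by $K=1K'$. Pointer procedure: there are pointers $P_0,P_1,P_2,\dots$; each is either uninitiated or holds a word from $S=\{1,2,11,22\}$. The recursive procedure $\mathrm{Inc}(k)$ acts as follows. (i) If $P_k$ is uninitiated, set $P_k:=22$. (ii) If $k\ge1$ and $P_k$ holds two symbols ($11$ or $22$), delete one symbol (so $11\mapsto1$, $22\mapsto2$) and stop. (iii) Otherwise (i.e. $k=0$, or $k\ge1$ and $P_k$ holds a single symbol), call $\mathrm{Inc}(k+1)$; afterwards let $\ell$ be the first symbol of the word held by $P_{k+1}$ (which is not modified here), let $a$ be the symbol occurring in the word held by $P_k$ before this step, and set $P_k:=\bar a^{\,\ell}$, the word consisting of $\ell$ copies of the symbol $\bar a$, where $\bar1=2$, $\bar2=1$. Initially $P_0=22$ and all $P_k$, $k\ge1$, are uninitiated; $\mathrm{Inc}(0)$ is then called repeatedly. *)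

(* Defs.v *)
From mathcomp Require Import all_boot.
Set Implicit Arguments. Unset Strict Implicit. Unset Printing Implicit Defensive.

(** Symbols are the naturals 1 and 2; words are [seq nat]. *)
Definition flip (a : nat) : nat := 3 - a.

(** Kolakoski sequence, 1-indexed ([K 0] is irrelevant).  "The run-length
    sequence of K is K itself, K_1 = 1": K is the concatenation of blocks
    B_1 B_2 ... with B_i = c_i^(K_i), the symbols c_i alternating starting with
    c_1 = K_1 = 1.  Since every K_i >= 1 and consecutive symbols differ, the B_i
    are exactly the maximal runs of K. *)
Definition kol_blocks (K : nat -> nat) (m : nat) : seq nat :=
  flatten [seq nseq (K i) (if odd i then 1 else 2) | i <- iota 1 m].

Definition is_kolakoski (K : nat -> nat) : Prop :=
  K 1 = 1 /\
  (forall n, 1 <= n -> K n \in [:: 1; 2]) /\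
  (forall m p, p < size (kol_blocks K m) -> K p.+1 = nth 0 (kol_blocks K m) p).

(** Pointer state: the list [P_0; P_1; ...; P_L] of initiated pointers;
    pointers with index beyond the list are uninitiated (once a pointer is
    initiated it stays so, and Inc(k+1) is only ever called through Inc(k),
    so initiated pointers always form an initial segment). *)

(** [incS ps] performs Inc(k) for k >= 1, where [ps = [P_k; P_(k+1); ...]]. *)
Fixpoint incS (ps : seq (seq nat)) : seq (seq nat) :=
  match ps with
  | [::] => [:: [:: 2]]            (* (i) P_k := 22, then (ii) delete a symbol *)
  | w :: rest =>
      if size w == 2 then behead w :: rest
      else let r := incS rest in
           nseq (head 0 (head [::] r)) (flip (head 0 w)) :: r
  end.

(** Inc(0) on [ps = [P_0; P_1; ...]]: always case (iii). *)
Definition inc0 (ps : seq (seq nat)) : seq (seq nat) :=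
  let: (w, rest) := match ps with
                    | [::] => ([:: 2; 2], [::])
                    | w :: rest => (w, rest)
                    end in
  let r := incS rest in
  nseq (head 0 (head [::] r)) (flip (head 0 w)) :: r.

Definition init_state : seq (seq nat) := [:: [:: 2; 2]].

Definition R (j : nat) : seq nat := head [::] (iter j inc0 init_state).

Definition Rcat (m : nat) : seq nat := flatten [seq R j | j <- iota 0 m].

(* Main.v *)
Require Import Defs.
From mathcomp Require Import all_boot.
From mathcomp Require Import zify.
Set Implicit Arguments. Unset Strict Implicit.

Definition cc (j : nat) : nat := if odd j then 1 else 2.
Definition rr (x : nat -> nat) j := nseq (x j) (cc j).
Definition xs (x : nat -> nat) n := flatten [seq rr x j | j <- iota 0 n].
Definition ss x n := size (xs x n).

Fixpoint rho (x : nat -> nat) (p : nat) : nat :=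
  match p with
  | 0 => 0
  | p'.+1 => let t := rho x p' in if ss x t.+1 == p'.+1 then t.+1 else t
  end.

Definition suffix x p := nseq (ss x (rho x p).+1 - p) (cc (rho x p)).

Fixpoint Tf x n p : seq (seq nat) :=
  match n with
  | 0 => [::]
  | n'.+1 => if p == 0 then [::] else suffix x p :: Tf x n' (rho x p)
  end.

Definition T x p := Tf x p p.

Lemma xsS x n : xs x n.+1 = xs x n ++ rr x n.
Proof. by rewrite /xs -addn1 iotaD map_cat flatten_cat /= cats0. Qed.

Lemma ssS x n : ss x n.+1 = ss x n + x n.
Proof. by rewrite /ss xsS size_cat size_nseq. Qed.

Lemma ss0 x : ss x 0 = 0.
Proof. by []. Qed.

Lemma rhoS x p : rho x p.+1 = if ss x (rho x p).+1 == p.+1 then (rho x p).+1 else rho x p.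
Proof. by []. Qed.

Lemma flip_cc t : flip (cc t) = cc t.+1.
Proof. by rewrite /cc /flip /=; case: (odd t). Qed.


Lemma rho_bounds x (hpos : forall j, 0 < x j) p :
  ss x (rho x p) <= p < ss x (rho x p).+1.
Proof.
elim: p => [|p IH] /=.
  by rewrite ssS hpos.
case: eqP => E.
  have := ssS x (rho x p).+1; have := hpos (rho x p).+1; lia.
move: IH E; lia.
Qed.

Lemma ss_big x (hpos : forall j, 0 < x j) (hx0 : x 0 = 2) t : t.+2 <= ss x t.+1.
Proof.
elim: t => [|t IH]; first by rewrite ssS ss0 hx0.
rewrite ssS; have := hpos t.+1; lia.
Qed.

Lemma rho_lt x (hpos : forall j, 0 < x j) (hx0 : x 0 = 2) p : 0 < p -> rho x p < p.
Proof.
move=> Hp; have := rho_bounds hpos p.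
case E: (rho x p) => [|u] //.
have := ss_big hpos hx0 u; lia.
Qed.

Lemma x_cc x (hpos : forall j, 0 < x j)
  (hxs : forall n p, p < size (xs x n) -> nth 0 (xs x n) p = x p) p :
  x p = cc (rho x p).
Proof.
have [H1 H2] := andP (rho_bounds hpos p).
rewrite -(hxs (rho x p).+1); last by [].
rewrite xsS nth_cat -/(ss x (rho x p)) ltnNge H1 /= /rr nth_nseq.
move: H1 H2; rewrite ssS => H1 H2; rewrite ifT //; lia.
Qed.

Lemma head_suffix x (hpos : forall j, 0 < x j)
  (hxs : forall n p, p < size (xs x n) -> nth 0 (xs x n) p = x p) q :
  head 0 (suffix x q) = x q.
Proof.
rewrite /suffix (x_cc hpos hxs q).
have [H1 H2] := andP (rho_bounds hpos q).
by case E: (ss x (rho x q).+1 - q) => [|d] /=; [lia|].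
Qed.

Lemma Tf_eq x (hpos : forall j, 0 < x j) (hx0 : x 0 = 2) n :
  forall m p, p <= n -> p <= m -> Tf x n p = Tf x m p.
Proof.
elim: n => [|n IH] m p Hn Hm.
  have -> : p = 0 by lia.
  by case: m Hm.
case: m Hm => [|m] Hm.
  by have -> : p = 0 by lia.
rewrite /=; case: eqP => // Hp0.
have H := rho_lt hpos hx0 (p:=p) ltac:(lia).
by rewrite (IH m) //; lia.
Qed.

Lemma T_cons x (hpos : forall j, 0 < x j) (hx0 : x 0 = 2) p :
  0 < p -> T x p = suffix x p :: T x (rho x p).
Proof.
case: p => [|p] // _; rewrite /T /=.
have H := rho_lt hpos hx0 (p:=p.+1) isT.
by rewrite (Tf_eq hpos hx0 (m:=rho x p.+1)) //; lia.
Qed.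

Lemma incS_T x (hpos : forall j, 0 < x j) (hx0 : x 0 = 2)
  (hx2 : forall j, x j <= 2)
  (hxs : forall n p, p < size (xs x n) -> nth 0 (xs x n) p = x p) :
  forall p, incS (T x p) = T x p.+1.
Proof.
have key : forall n p, p < n -> incS (T x p) = T x p.+1.
  elim=> [|n IH] p // Hp.
  case: p Hp => [|p] Hp.
    rewrite (T_cons hpos hx0 (p:=1)) //.
    have Er1 : rho x 1 = 0 by have := rho_lt hpos hx0 (p:=1) isT; lia.
    have E1 : ss x 1 = 2 by rewrite ssS hx0.
    by rewrite /suffix Er1 E1.
  rewrite (T_cons hpos hx0 (p:=p.+1)) // (T_cons hpos hx0 (p:=p.+2)) //.
  have [H1 H2] := andP (rho_bounds hpos p.+1).
  set t := rho x p.+1 in H1 H2 *.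
  have Hx2 := hx2 t; rewrite ssS in H2.
  rewrite [incS (_ :: _)]/= {1}/suffix size_nseq -/t.
  case: eqP => E.
    have Er : rho x p.+2 = t.
      by rewrite rhoS -/t; case: eqP => //; rewrite ssS in E *; lia.
    rewrite /suffix Er -/t E; congr (_ :: _).
    by have -> : ss x t.+1 - p.+2 = 1 by lia.
  have Er : rho x p.+2 = t.+1.
    by rewrite rhoS -/t; case: eqP => //; rewrite ssS in E *; lia.
  have Ht : t < n.
    have := rho_lt hpos hx0 (p:=p.+1) isT; rewrite -/t; lia.
  rewrite Er (IH t Ht) (T_cons hpos hx0 (p:=t.+1)) //= head_suffix //.
  congr (_ :: _).
  rewrite /suffix Er -/t.
  have -> : ss x t.+2 - p.+2 = x t.+1.
    rewrite ssS; move: E; rewrite ssS; lia.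
  have -> : ss x t.+1 - p.+1 = 1 by move: E; rewrite ssS; lia.
  by rewrite /= flip_cc.
by move=> p; apply: (key p.+1).
Qed.

Lemma iter_inc0 x (hpos : forall j, 0 < x j) (hx0 : x 0 = 2)
  (hx2 : forall j, x j <= 2)
  (hxs : forall n p, p < size (xs x n) -> nth 0 (xs x n) p = x p) j :
  iter j inc0 init_state = rr x j :: T x j.
Proof.
elim: j => [|j IH]; first by rewrite /= /rr hx0.
rewrite iterS IH /inc0 (incS_T hpos hx0 hx2 hxs) (T_cons hpos hx0 (p:=j.+1)) //=.
rewrite head_suffix // /rr.
have := hpos j; case: (x j) => [|k] //= _.
by rewrite flip_cc.
Qed.

Theorem mainTheorem3 (K : nat -> nat) (HK : is_kolakoski K) :
  forall i : nat, exists m : nat,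
    i < size (Rcat m) /\ nth 0 (Rcat m) i = K i.+2.
Proof.
case: HK => [K1 [K12 Kb]].
pose x n := K n.+2.
have kolxs : forall n, kol_blocks K n.+1 = 1 :: xs x n.
  move=> n; rewrite /kol_blocks /= K1 /= /xs.
  rewrite -[2]/(2+0) iotaDl -map_comp; congr (_ :: flatten _).
  apply: eq_map => j /=; rewrite /rr /cc /x add2n /=.
  by rewrite negbK.
have hxs : forall n p, p < size (xs x n) -> nth 0 (xs x n) p = x p.
  move=> n p Hp; have := Kb n.+1 p.+1; rewrite kolxs /= => H; by rewrite /x -H.
have h12 : forall j, 0 < x j /\ x j <= 2.
  move=> j; have := K12 j.+2 isT; rewrite !inE /x.
  by case/orP => /eqP ->.
have hpos : forall j, 0 < x j by move=> j; case: (h12 j).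
have hx2 : forall j, x j <= 2 by move=> j; case: (h12 j).
have hx0 : x 0 = 2.
  have := hxs 1 0; rewrite /xs /= /rr /cc cats0.
  by case: (x 0) (hpos 0) => [|k] //= _ /(_ isT).
have RE : forall m, Rcat m = xs x m.
  move=> m; rewrite /Rcat /xs; congr flatten; apply: eq_map => j.
  by rewrite /R (iter_inc0 hpos hx0 hx2 hxs).
move=> i; exists i.+1; rewrite RE.
have Hs : i < size (xs x i.+1).
  have := ss_big hpos hx0 i; rewrite /ss; lia.
by split=> //; rewrite hxs.
Qed.
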